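(* In the setting below, for each $k\in[d-1]$, let $P_k(t)$ be the orthogonal projector onto the row space of $c_{TT}(t)^{<k>}$, so that $P_k(t)=\tilde X_{\ge k+1}(t)\tilde X_{\ge k+1}(t)^\top$ for the right interface matrix of any minimal right-orthogonal TT decomposition of $c_{TT}(t)$. Then \[\frac{d}{dt}P_k(t)\Big|_{t=0}=(I-\tilde X_{\ge k+1}\tilde X_{\ge k+1}^\top)V_{\ge k+1}R_k^{-1}\tilde X_{\ge k+1}^\top+\tilde X_{\ge k+1}R_k^{-\top}V_{\ge k+1}^\top(I-\tilde X_{\ge k+1}\tilde X_{\ge k+1}^\top),\] where $I=I_{n_{k+1}\cdots n_d}$.
   Context: Fix $d\ge2$, positive integers $n_1,\dots,n_d$, $\mathbf r=(r_1,\dots,r_{d-1})$, $r_0=r_d=1$. Flattenings $Z^{<\mu>}\in\mathbb R^{(n_1\cdots n_\mu)\times(n_{\mu+1}\cdots n_d)}$ use colexicographic order; $\mathcal M_{\mathbf r}$ is the manifold of tensors of TT-rank $(\mathrm{rank}\,Z^{<1>},\dots,\mathrm{rank}\,Z^{<d-1>})=\mathbf r$. $X\in\mathcal M_{\mathbf r}$ has a minimal left-orthogonal TT decomposition $U_1,\dots,U_d$ ($U_k\in\mathbb R^{r_{k-1}\times n_k\times r_k}$, $X(i_1,\dots,i_d)=U_1(i_1)\cdots U_d(i_d)$, $(U_k^L)^\top U_k^L=I$ for $k<d$, $U^L:=U^{<2>}$, $U^R:=U^{<1>}$) and a minimal right-orthogonal decomposition $\tilde U_1,\dots,\tilde U_d$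 ($\tilde U_k^R(\tilde U_k^R)^\top=I$, $k\ge2$). Right interface matrices: $X_{\ge d+1}=1$, $X_{\ge k}^\top=U_k^R(X_{\ge k+1}^\top\otimes I_{n_k})$, and $\tilde X_{\ge k}$ likewise from $\tilde U_k$; $R_k\in\mathbb R^{r_k\times r_k}$ is the invertible matrix with $X_{\ge k+1}=\tilde X_{\ge k+1}R_k$. $V\in\mathrm T_X\mathcal M_{\mathbf r}$ is given by cores $\delta V_k$, $V=\sum_kU_1(i_1)\cdots U_{k-1}(i_{k-1})\delta V_k(i_k)U_{k+1}(i_{k+1})\cdots U_d(i_d)$, $(\delta V_k^L)^\top U_k^L=0$ for $k<d$; $V_{\ge d+1}=0$, $V_{\ge k}^\top=U_k^R(V_{\ge k+1}^\top\otimes I_{n_k})+\delta V_k^R(X_{\ge k+1}^\top\otimes I_{n_k})$. $c_1,\dots,c_d$ are smooth core curves on $(-\epsilon,\epsilon)$ with $c_k(t)=U_k+t\,\delta V_k+O(t^2)$ ($k<d$), $c_d(t)=U_d+t\,\delta V_d$, forming for each $t$ a minimal left-orthogonal TT decomposition of $c_{TT}(t)\in\mathcal M_{\mathbf r}$, where $c_{TT}(t)(i_1,\dots,i_d)=c_1(t)(i_1)\cdots c_d(t)(i_d)$. *)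

(* Defs.v *)
From HB Require Import structures.
From mathcomp Require Import all_boot all_order all_algebra.
From mathcomp Require Import all_classical all_reals all_analysis.
Set Implicit Arguments. Unset Strict Implicit. Unset Printing Implicit Defensive.
Import Order.TTheory GRing.Theory Num.Theory.
Import numFieldNormedType.Exports.
Local Open Scope ring_scope.

(* Positions are 1-based: k = 1..d.
   n k = mode size n_k, r k = TT rank r_k (r 0 = r d = 1 is imposed in the
   theorem). *)

Section TT.
Variable R : realType.
Variables n r : nat -> nat.

Definition core := forall k : nat, 'I_(n k) -> 'M[R]_(r k.-1, r k).

(* entry of a matrix at natural-number indices (0 outside the range) *)
Definition mxnth m p (A : 'M[R]_(m, p)) (i j : nat) : R :=
  match (insub i : option 'I_m), (insub j : option 'I_p) with
  | Some i', Some j' => A i' j'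
  | _, _ => 0
  end.

(* slice U_k(i) at a natural-number index (0 outside the range) *)
Definition slice (U : core) (k i : nat) : 'M[R]_(r k.-1, r k) :=
  match (insub i : option 'I_(n k)) with Some o => U k o | None => 0 end.

(* Unfoldings of core k (colexicographic order):
   U^L = U^{<2>} in R^{(r_{k-1} n_k) x r_k}, row (a,i) |-> a + r_{k-1} i;
   U^R = U^{<1>} in R^{r_{k-1} x (n_k r_k)}, column (i,b) |-> i + n_k b. *)
Definition coreL (U : core) (k : nat) : 'M[R]_(r k.-1 * n k, r k) :=
  \matrix_(a, b) mxnth (slice U k (a %/ r k.-1)) (a %% r k.-1) b.
Definition coreR (U : core) (k : nat) : 'M[R]_(r k.-1, n k * r k) :=
  \matrix_(a, b) mxnth (slice U k (b %% n k)) a (b %/ n k).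

Definition left_orth (U : core) (k : nat) : Prop :=
  (coreL U k)^T *m coreL U k = 1%:M.
Definition right_orth (U : core) (k : nat) : Prop :=
  coreR U k *m (coreR U k)^T = 1%:M.

(* tailchain U m k i a = (U_k(i_k) U_{k+1}(i_{k+1}) ... U_{k+m-1}(i_{k+m-1}))_{a,0},
   the chain being closed on the right by the 1x1 matrix 1 (X_{>= d+1} = 1);
   equivalently it is the unfolded recursion
   X_{>=k}^T = U_k^R (X_{>=k+1}^T (x) I_{n_k}) entrywise. *)
Fixpoint tailchain (U : core) (m k : nat) (i : nat -> nat) (a : nat) : R :=
  match m with
  | 0 => (a == 0)%:R
  | m'.+1 => \sum_(b < r k) mxnth (slice U k (i k)) a b * tailchain U m' k.+1 i b
  end.

(* entrywise unfolding of
   V_{>=k}^T = U_k^R (V_{>=k+1}^T (x) I) + dV_k^R (X_{>=k+1}^T (x) I), V_{>=d+1} = 0 *)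
Fixpoint tailchainV (U dV : core) (m k : nat) (i : nat -> nat) (a : nat) : R :=
  match m with
  | 0 => 0
  | m'.+1 => \sum_(b < r k)
      (mxnth (slice U k (i k)) a b * tailchainV U dV m' k.+1 i b
       + mxnth (slice dV k (i k)) a b * tailchain U m' k.+1 i b)
  end.

Definition ttentry (U : core) (d : nat) (i : nat -> nat) : R := tailchain U d 1 i 0.

Definition tdim (k d : nat) : nat := \prod_(k <= j < d.+1) n j.

(* colexicographic decoding: if a encodes (i_k, i_{k+1}, ...) with i_k fastest,
   cdigit k a j = i_j *)
Definition cdigit (k a j : nat) : nat := (a %/ \prod_(k <= l < j) n l) %% n j.

Definition Xge (U : core) (d k : nat) : 'M[R]_(tdim k d, r k.-1) :=
  \matrix_(a, b) tailchain U (d.+1 - k) k (cdigit k a) b.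

Definition Vge (U dV : core) (d k : nat) : 'M[R]_(tdim k d, r k.-1) :=
  \matrix_(a, b) tailchainV U dV (d.+1 - k) k (cdigit k a) b.

Definition flat (U : core) (d mu : nat) : 'M[R]_(tdim 1 mu, tdim mu.+1 d) :=
  \matrix_(a, b) ttentry U d (fun j => if (j <= mu)%N then cdigit 1 a j else cdigit mu.+1 b j).

End TT.

Definition is_orth_proj (R : realType) m p (A : 'M[R]_(m, p)) (P : 'M[R]_p) : Prop :=
  P^T = P /\ P *m P = P /\ (P == A)%MS.

Definition smooth_on (R : realType) (A : set R) (f : R -> R) : Prop :=
  forall m x, A x -> derivable (derive1n m f) x 1.

(* Main.v *)
Require Import Defs.
From HB Require Import structures.
From mathcomp Require Import all_boot all_order all_algebra.
From mathcomp Require Import all_classical all_reals all_analysis.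
Import Order.TTheory GRing.Theory Num.Theory.
Import numFieldNormedType.Exports.
Local Open Scope ring_scope.
Local Open Scope classical_set_scope.
From mathcomp Require Import perm ring.

Section S.
Context {R : realType}.
Implicit Types (f g : R -> R).
Lemma dD f g (x df dg : R) : is_derive x 1 f df -> is_derive x 1 g dg ->
  is_derive x 1 (fun t => f t + g t) (df + dg).
Proof. move=> a b; exact: is_deriveD. Qed.
Lemma dM f g (x df dg : R) : is_derive x 1 f df -> is_derive x 1 g dg ->
  is_derive x 1 (fun t => f t * g t) (f x * dg + g x * df).
Proof. move=> a b; exact: is_deriveM. Qed.
Lemma dN f (x df : R) : is_derive x 1 f df -> 
  is_derive x 1 (fun t => - f t) (- df).
Proof. move=> a; exact: is_deriveN. Qed.
Lemma dC (x c : R) : is_derive x 1 (fun t : R => c) 0.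
Proof. exact: is_derive_cst. Qed.
Lemma dI (x : R) : is_derive x 1 (fun t : R => t) 1.
Proof. exact: is_derive_id. Qed.
Lemma dS (I : Type) (s : seq I) (P : pred I) (h : I -> R -> R) (dh : I -> R) (x : R) :
  (forall i, is_derive x 1 (h i) (dh i)) ->
  is_derive x 1 (fun t => \sum_(i <- s | P i) h i t) (\sum_(i <- s | P i) dh i).
Proof.
move=> H; elim: s => [|a s IH].
  under eq_fun do rewrite big_nil. rewrite big_nil; exact: dC.
under eq_fun do rewrite big_cons. rewrite big_cons.
by case: (P a) => //; apply: dD.
Qed.
Lemma derS (I : Type) (s : seq I) (P : pred I) (h : I -> R -> R) (x : R) :
  (forall i, derivable (h i) x 1) ->
  derivable (fun t => \sum_(i <- s | P i) h i t) x 1.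
Proof.
move=> H; have := @dS I s P h (fun i => 'D_1 (h i) x) x.
by case=> // i; apply: derivableP.
Qed.
Lemma derP (I : Type) (s : seq I) (P : pred I) (h : I -> R -> R) (x : R) :
  (forall i, derivable (h i) x 1) ->
  derivable (fun t => \prod_(i <- s | P i) h i t) x 1.
Proof.
move=> H; elim: s => [|a s IH].
  under eq_fun do rewrite big_nil. exact: derivable_cst.
under eq_fun do rewrite big_cons.
case: (P a) => //.
have := @dM (h a) (fun t => \prod_(i <- s | P i) h i t) x _ _ (derivableP (H a)) (derivableP IH).
by case.
Qed.
Lemma bigO_deriv (f : R -> R) (u v : R) : derivable f 0 1 ->
  (fun t => f t - (u + t * v)) =O_ (0 : R) (fun t => t ^+ 2) ->
  f 0 = u /\ is_derive (0:R) (1:R) f v.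
Proof.
move=> df /eqO_exP [K K0 HK].
have f0 : f 0 = u.
  have := nbhs_singleton HK; rewrite /= expr0n /= normr0 mulr0 mul0r addr0.
  by rewrite normr_le0 subr_eq0 => /eqP.
split => //.
set g := fun t => f t - (u + t * v).
have dl : is_derive (0:R) 1 (fun t : R => u + t * v) v.
  have h1 := @dD (fun _ => u) (fun t => t * v) 0 0 (0 * 0 + v * 1) (dC _ _) (@dM (fun t => t) (fun _ => v) 0 1 0 (dI _) (dC _ _)).
  apply: is_derive_eq h1 _.
  by rewrite mul0r !add0r mulr1.
have cg : (fun h : R => h^-1 *: (g (h *: 1 + 0) - g 0)) @ 0^' --> (0:R).
  apply/cvgrPdist_le => e e0.
  have HK' : \forall x \near (0:R)^', `|g x| <= K * `|x ^+ 2|.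
    by apply: cvg_within.
  near=> h.
  have hn0 : h != 0 by near: h; exact: nbhs_dnbhs_neq.
  rewrite sub0r normrN /g f0 mul0r !addr0 subrr subr0 [h%:A]mulr1 normrM normrV ?unitfE //.
  rewrite ler_pdivrMl ?normr_gt0 //.
  have H1 : `|f h - (u + h*v)| <= K * `|h ^+ 2| by exact: (near HK' h).
  apply: (le_trans H1).
  rewrite normrX expr2 mulrCA ler_wpM2l //.
  rewrite mulrC -ler_pdivlMr //.
  near: h; apply: cvg_within.
  apply/nbhs_normP; exists (e / K) => /=; first by rewrite divr_gt0.
  by move=> x; rewrite /ball_ /= sub0r normrN => /ltW.
have dg : derivable g 0 1 by apply/cvg_ex; exists 0.
have Dg : 'D_1 g 0 = 0 by apply: cvg_lim.
have -> : f = (fun t => g t + (u + t * v)) by apply/funext => t; rewrite /g /= subrK.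
have h2 := @dD g (fun t => u + t * v) 0 _ _ (derivableP dg) dl.
apply: is_derive_eq h2 _.
by rewrite Dg add0r.
Unshelve. all: by end_near. Qed.
End S.

Unset Implicit Arguments. Set Strict Implicit.
Set Implicit Arguments. Unset Strict Implicit.
Section M.
Variable R : realType.
Lemma isd_der (f : R -> R) (x df : R) : is_derive x 1 f df -> derivable f x 1.
Proof. by case. Qed.
Lemma isd_val (f : R -> R) (x df : R) : is_derive x 1 f df -> 'D_1 f x = df.
Proof. by case. Qed.
Definition mxder m n (F : R -> 'M[R]_(m,n)) (F' : 'M[R]_(m,n)) :=
  forall i j, is_derive (0:R) 1 (fun t => F t i j) (F' i j).

Lemma mxder_is_derive m n (F : R -> 'M[R]_(m,n)) F' : mxder F F' -> is_derive (0:R) 1 F F'.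
Proof.
move=> H.
have d : derivable F 0 1 by apply/derivable_mxP => i j; exact: isd_der (H i j).
refine (DeriveDef d _); rewrite derive_mx; last exact: d.
apply/(@matrixP R) => i j.
by rewrite mxE (isd_val (H i j)).
Qed.

Lemma mxder_uniq m n (F : R -> 'M[R]_(m,n)) A B : mxder F A -> mxder F B -> A = B.
Proof.
move=> HA HB; apply/matrixP => i j.
by rewrite -(isd_val (HA i j)) -(isd_val (HB i j)).
Qed.

Lemma mxder_near m n (F G : R -> 'M[R]_(m,n)) F' :
  (\forall t \near (0:R), F t = G t) -> mxder F F' -> mxder G F'.
Proof.
move=> FG H i j; apply: near_eq_is_derive (H i j).
by near=> t; rewrite (near FG t).
Unshelve. all: by end_near. Qed.

Lemma mxderC m n (A : 'M[R]_(m,n)) : mxder (fun _ => A) 0.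
Proof. by move=> i j; rewrite mxE; apply: dC. Qed.

Lemma mxderD m n (F G : R -> 'M[R]_(m,n)) F' G' :
  mxder F F' -> mxder G G' -> mxder (fun t => F t + G t) (F' + G').
Proof.
move=> HF HG i j; under eq_fun do rewrite mxE.
rewrite mxE; exact: (@dD _ (fun t => F t i j) (fun t => G t i j) 0 _ _ (HF i j) (HG i j)).
Qed.

Lemma mxderN m n (F : R -> 'M[R]_(m,n)) F' :
  mxder F F' -> mxder (fun t => - F t) (- F').
Proof.
move=> HF i j; under eq_fun do rewrite mxE.
by rewrite mxE; apply: (@dN _ (fun t => F t i j)).
Qed.

Lemma mxderT m n (F : R -> 'M[R]_(m,n)) F' :
  mxder F F' -> mxder (fun t => (F t)^T) F'^T.
Proof. by move=> HF i j; under eq_fun do rewrite mxE; rewrite mxE; apply: HF. Qed.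

Lemma mxderM m n p (A : R -> 'M[R]_(m,n)) (B : R -> 'M[R]_(n,p)) A' B' :
  mxder A A' -> mxder B B' ->
  mxder (fun t => A t *m B t) (A' *m B 0 + A 0 *m B').
Proof.
move=> HA HB i j; under eq_fun do rewrite mxE.
rewrite !mxE.
apply: is_derive_eq.
  apply: (@dS _ _ _ _ (fun l t => A t i l * B t l j)) => l.
  exact: (@dM _ (fun t => A t i l) (fun t => B t l j) 0 _ _ (HA i l) (HB l j)).
rewrite /= -big_split /=; apply: eq_bigr => l _.
by rewrite addrC [B 0 l j * _]mulrC.
Qed.

Definition mxdbl m n (F : R -> 'M[R]_(m,n)) := forall i j, derivable (fun t => F t i j) 0 1.

Lemma mxdbl_det n (A : R -> 'M[R]_n) : mxdbl A -> derivable (fun t => \det (A t)) 0 1.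
Proof.
move=> H; rewrite /determinant.
apply: derS => s.
have := @dM _ (fun _ => (-1) ^+ s) (fun t => \prod_i A t i (s i)) 0 0 _ (dC _ _)
  (derivableP (derP _ _ _ (fun i t => A t i (s i)) _ _)).
by case=> //.
Qed.

Lemma mxdbl_adj n (A : R -> 'M[R]_n) : mxdbl A -> mxdbl (fun t => \adj (A t)).
Proof.
move=> H i j; under eq_fun do rewrite mxE.
rewrite /cofactor.
have := @dM _ (fun _ => (-1) ^+ (j + i)) (fun t => \det (row' j (col' i (A t)))) 0 0 _ (dC _ _)
  (derivableP (mxdbl_det (A := fun t => row' j (col' i (A t))) _)).
case=> // k l; under eq_fun do rewrite !mxE; exact: H.
Qed.

Lemma mxder_inv n (G : R -> 'M[R]_n) G' :
  mxder G G' -> (\forall t \near (0:R), G t \in unitmx) ->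
  mxder (fun t => invmx (G t)) (- (invmx (G 0) *m G' *m invmx (G 0))).
Proof.
move=> HG HU.
have U0 : G 0 \in unitmx := nbhs_singleton HU.
set F := fun t => (\det (G t))^-1 *: \adj (G t).
have FG : \forall t \near (0:R), F t = invmx (G t).
  by near=> t; rewrite /invmx (near HU t).
have dF : mxdbl F.
  move=> i j.
  have E : (fun t => F t i j) = (fun t => (\det (G t))^-1 * \adj (G t) i j).
    by apply/funext => t; rewrite /F mxE.
  rewrite E.
  have dG : mxdbl G by move=> k l; exact: isd_der (HG k l).
  have dA := mxdbl_adj dG.
  have ndet : \det (G 0) != 0 by rewrite -unitfE -unitmxE.
  have d1 := @derivableV R R (fun t => \det (G t)) 0 1 ndet (mxdbl_det dG).
  have d2 := dA i j.
  exact: (derivableM d1 d2).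
set H' := \matrix_(i, j) 'D_1 (fun t => F t i j) 0.
have HF : mxder F H' by move=> i j; rewrite mxE; apply: derivableP.
have HI : mxder (fun t => invmx (G t)) H' := mxder_near FG HF.
have HP := mxderM HI HG.
have HP1 : mxder (fun t => invmx (G t) *m G t) 0.
  apply: mxder_near (mxderC 1%:M).
  by near=> t; rewrite mulVmx // (near HU t).
have E := mxder_uniq HP HP1.
suff E2 : H' = - (invmx (G 0) *m G' *m invmx (G 0)) by rewrite -E2.
rewrite -[H']mulmx1 -(mulmxV U0) mulmxA.
by move/eqP: E; rewrite addr_eq0 => /eqP ->; rewrite mulNmx.
Unshelve. all: by end_near. Qed.
End M.

Unset Implicit Arguments. Set Strict Implicit.
Set Implicit Arguments. Unset Strict Implicit.
Section C.
Variable R : realType.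
Variables n r : nat -> nat.
Implicit Types W : core R n r.

Fixpoint gchain W (m k : nat) (i : nat -> nat) (a : nat) (e : nat -> R) : R :=
  match m with
  | 0 => e a
  | m'.+1 => \sum_(b < r k) mxnth (slice W k (i k)) a b * gchain W m' k.+1 i b e
  end.

Lemma gchainS W m k i a e : gchain W m.+1 k i a e =
  \sum_(b < r k) mxnth (slice W k (i k)) a b * gchain W m k.+1 i b e.
Proof. by []. Qed.

Lemma tailchain_g W m k i a : tailchain W m k i a = gchain W m k i a (fun b => (b == 0)%:R).
Proof.
elim: m k a => [//|m IH] k a /=; apply: eq_bigr => b _; by rewrite IH.
Qed.

Lemma gchain_cat W m1 m2 k i a e :
  gchain W (m1 + m2) k i a e = gchain W m1 k i a (fun b => gchain W m2 (k + m1) i b e).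
Proof.
elim: m1 k a => [|m1 IH] k a /=; first by rewrite addn0.
apply: eq_bigr => b _; by rewrite IH addSnnS.
Qed.

Lemma eq_gchain W m k i i' a e :
  (forall j, (k <= j < k + m)%N -> i j = i' j) ->
  gchain W m k i a e = gchain W m k i' a e.
Proof.
elim: m k a => [//|m IH] k a H /=.
rewrite H ?leqnn ?addnS ?ltnS ?leq_addr //; apply: eq_bigr => b _.
rewrite IH // => j /andP[h1 h2]; apply: H.
by rewrite (ltnW h1) addnS.
Qed.

Lemma gchain_lin W m k i a e N : (0 < m)%N -> r (k + m).-1 = N ->
  gchain W m k i a e = \sum_(l < N) gchain W m k i a (fun x => (x == l)%:R) * e l.
Proof.
elim: m k a => [//|m IH] k a _ HN.
case: m IH HN => [|m] IH HN.
  rewrite addn1 /= in HN; subst N; rewrite gchainS.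
  under [RHS]eq_bigr do rewrite gchainS.
  under [RHS]eq_bigr do rewrite big_distrl /=.
  rewrite exchange_big /=; apply: eq_bigr => b _.
  rewrite (bigD1 b) //= eqxx mulr1 big1 ?addr0 // => l /negPf; rewrite -val_eqE /=.
  by rewrite eq_sym => ->; rewrite mulr0 mul0r.
rewrite [gchain _ m.+2 _ _ _ _]gchainS; under [RHS]eq_bigr do rewrite [gchain _ m.+2 _ _ _ _]gchainS big_distrl.
rewrite exchange_big; apply: eq_bigr => b _.
rewrite (IH k.+1 b) // ?addSnnS // big_distrr; apply: eq_bigr => l _.
by rewrite /= mulrA.
Qed.

Lemma eq_tailchain W W' m k i a :
  (forall j, (k <= j < k + m)%N -> W j = W' j) ->
  tailchain W m k i a = tailchain W' m k i a.
Proof.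
elim: m k a => [//|m IH] k a H /=.
have -> : slice W k (i k) = slice W' k (i k).
  by rewrite /slice H // leqnn addnS ltnS leq_addr.
apply: eq_bigr => b _; rewrite IH // => j /andP[h1 h2]; apply: H.
by rewrite (ltnW h1) addnS.
Qed.

Definition Lm W k : 'M[R]_(tdim n 1 k, r k) :=
  \matrix_(a, l) gchain W k 1 (cdigit n 1 a) 0 (fun x => (x == l)%:R).

Lemma flat_fact W d k : (0 < k <= d)%N ->
  flat W d k = Lm W k *m (Xge W d k.+1)^T.
Proof.
case/andP=> k0 kd; apply/matrixP => a b; rewrite !mxE /ttentry tailchain_g.
have E e i : gchain W d 1 i 0 e = gchain W (k + (d-k)) 1 i 0 e by rewrite subnKC.
rewrite E gchain_cat (@gchain_lin _ k _ _ _ _ (r k)) //.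
apply: eq_bigr => l _; rewrite !mxE; congr (_ * _).
  apply: eq_gchain => j /andP[_]; rewrite add1n ltnS => ->. done.
rewrite tailchain_g subSS add1n.
apply: eq_gchain => j /andP[h _]; by rewrite leqNgt h.
Qed.
End C.

Unset Implicit Arguments. Set Strict Implicit.
Set Implicit Arguments. Unset Strict Implicit.

Lemma sum_split (R : realType) (F : nat -> R) p q :
  \sum_(a < p * q) F a = \sum_(y < q) \sum_(x < p) F (x + p * y)%N.
Proof.
elim: q => [|q IH]; first by rewrite muln0 !big_ord0.
rewrite mulnSr big_split_ord /= IH big_ord_recr /=; congr (_ + _).
by apply: eq_bigr => x _; rewrite addnC.
Qed.

Lemma quad (R : realType) (I J : finType) (a a' : J -> R) (f : I -> J -> R) :
  \sum_y (\sum_c a c * f y c) * (\sum_c a' c * f y c) =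
  \sum_c \sum_c' a c * a' c' * (\sum_y f y c * f y c').
Proof.
under eq_bigr do rewrite mulr_suml.
under eq_bigr do under eq_bigr do rewrite mulr_sumr.
rewrite exchange_big; apply: eq_bigr => c _.
rewrite exchange_big; apply: eq_bigr => c' _.
rewrite mulr_sumr; apply: eq_bigr => y _; ring.
Qed.

Section O.
Variable R : realType.
Variables n r : nat -> nat.
Implicit Types W : core R n r.

Lemma cdigit_0 j x y : (x < n j)%N -> cdigit n j (x + n j * y) j = x.
Proof.
move=> xn; rewrite /cdigit big_geq // divn1 addnC mulnC modnMDl modn_small //.
Qed.

Lemma cdigit_S j l x y : (x < n j)%N -> (j < l)%N ->
  cdigit n j (x + n j * y) l = cdigit n j.+1 y l.
Proof.
move=> xn jl; rewrite /cdigit big_ltn // divnMA.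
have n0 : (0 < n j)%N by apply: leq_ltn_trans xn.
have E : ((x + n j * y) %/ n j = y)%N by rewrite addnC mulnC divnMDl // divn_small // addn0.
by rewrite E.
Qed.

Lemma eq_tailchain_i W m k i i' a :
  (forall j, (k <= j < k + m)%N -> i j = i' j) ->
  tailchain W m k i a = tailchain W m k i' a.
Proof. by move=> H; rewrite !tailchain_g; apply: eq_gchain. Qed.

Lemma tdimS d j : (j <= d)%N -> tdim n j d = (n j * tdim n j.+1 d)%N.
Proof. by move=> jd; rewrite /tdim big_ltn // ltnS. Qed.

Lemma Xge_orth W d : r d = 1%N -> forall j, (j <= d.+1)%N ->
  (forall l, (j <= l <= d)%N -> (0 < n l)%N /\ right_orth W l) ->
  (Xge W d j)^T *m Xge W d j = 1%:M.
Proof.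
move=> rd j; move Em : (d.+1 - j)%N => m; elim: m j Em => [|m IH] j Em jd H.
  have -> : j = d.+1 by apply/eqP; rewrite eqn_leq jd /= -subn_eq0 Em.
  apply/matrixP => b b'; rewrite !mxE.
  have b0 : (b : nat) = 0%N.
    have := ltn_ord b; move: (nat_of_ord b) => bb; rewrite /= rd; by case: bb.
  have b'0 : (b' : nat) = 0%N.
    have := ltn_ord b'; move: (nat_of_ord b') => bb; rewrite /= rd; by case: bb.
  under eq_bigr do rewrite !mxE subnn /= b0 b'0 /= mulr1.
  rewrite sumr_const card_ord /tdim big_geq // -val_eqE /= b0 b'0.
  done.
have jd' : (j <= d)%N by rewrite -ltnS -subn_gt0 Em.
have Em' : (d.+1 - j.+1)%N = m by rewrite subnS Em.
have IH' := IH j.+1 Em' jd'.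
have IH2 : (Xge W d j.+1)^T *m Xge W d j.+1 = 1%:M.
  apply: IH' => l /andP[h1 h2]; apply: H; by rewrite h2 ltnW.
have [nj0 RO] := H j (introT andP (conj (leqnn j) jd')).
have Hx : forall (x : 'I_(n j)) y c, tailchain W (d.+1 - j) j (cdigit n j (x + n j * y)) c =
   \sum_(c' < r j) mxnth (slice W j x) c c' * tailchain W (d - j) j.+1 (cdigit n j.+1 y) c'.
  move=> x y c; rewrite (subSn jd') /= cdigit_0 //; apply: eq_bigr => c' _; congr (_ * _).
  by apply: eq_tailchain_i => l /andP[h _]; apply: cdigit_S.
apply/matrixP => b b'; rewrite !mxE.
under eq_bigr do rewrite !mxE.
set F := fun a : nat => tailchain W (d.+1 - j) j (cdigit n j a) b * tailchain W (d.+1 - j) j (cdigit n j a) b'.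
rewrite (eq_bigr (fun a : 'I_ _ => F a)) // -(big_mkord xpredT F) (tdimS jd') big_mkord sum_split.
have E1 : forall c c' : 'I_(r j), \sum_(y < tdim n j.+1 d)
    tailchain W (d - j) j.+1 (cdigit n j.+1 y) c * tailchain W (d - j) j.+1 (cdigit n j.+1 y) c'
    = (c == c')%:R.
  move=> c c'; move/matrixP: IH2 => /(_ c c'); rewrite !mxE => <-.
  by apply: eq_bigr => y _; rewrite !mxE subSS.
rewrite exchange_big /=.
have -> : \sum_(x < n j) \sum_(y < tdim n j.+1 d) F (x + n j * y)%N =
    \sum_(x < n j) \sum_(c < r j) mxnth (slice W j x) b c * mxnth (slice W j x) b' c.
  apply: eq_bigr => x _; rewrite /F.
  under eq_bigr => y _ do rewrite !Hx.
  rewrite (quad (fun c : 'I_(r j) => mxnth (slice W j x) b c) (fun c : 'I_(r j) => mxnth (slice W j x) b' c)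
   (fun (y : 'I_(tdim n j.+1 d)) (c : 'I_(r j)) => tailchain W (d - j) j.+1 (cdigit n j.+1 y) c)).
  apply: eq_bigr => c _; under eq_bigr => c' _ do rewrite E1.
  rewrite (bigD1 c) //= eqxx mulr1 big1 ?addr0 //.
  by move=> c' /negPf; rewrite eq_sym => ->; rewrite mulr0.
move/matrixP: RO => /(_ b b'); rewrite !mxE => <-.
pose G := fun z : nat => mxnth (slice W j (z %% n j)) b (z %/ n j) *
    mxnth (slice W j (z %% n j)) b' (z %/ n j).
rewrite [RHS](eq_bigr (fun z : 'I_ _ => G z)); last by move=> z _; rewrite !mxE.
rewrite (sum_split G) [RHS]exchange_big /=; apply: eq_bigr => x _.
apply: eq_bigr => c _.
have E : ((x + n j * c) %/ n j = c)%N by rewrite addnC mulnC divnMDl // divn_small // addn0.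
by rewrite /G E addnC mulnC modnMDl modn_small.
Qed.
End O.

Unset Implicit Arguments. Set Strict Implicit.
Set Implicit Arguments. Unset Strict Implicit.
Lemma zid (V : zmodType) (a b c d : V) : a - (b + c) + d = a - c + (d - b).
Proof. by rewrite opprD !addrA [a - b - c]addrAC [LHS]addrAC. Qed.
Section A.
Variable R : realType.

Lemma gram0 m N (M : 'M[R]_(m, N)) : M *m M^T = 0 -> M = 0.
Proof.
move=> H; apply/matrixP => i j; rewrite mxE.
move/matrixP: H => /(_ i i); rewrite !mxE => H.
have P : forall l : 'I_N, true -> 0 <= M i l ^+ 2 by move=> l _; exact: sqr_ge0.
have H' : \sum_(l < N) M i l ^+ 2 = 0.
  by rewrite -[X in _ = X]H; apply: eq_bigr => l _; rewrite mxE expr2.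
have := psumr_eq0P P H'; move=> /(_ j isT) /eqP.
by rewrite sqrf_eq0 => /eqP.
Qed.

Lemma gram_unit r N (Y : 'M[R]_(r, N)) : \rank Y = r -> Y *m Y^T \in unitmx.
Proof.
move=> rY; rewrite -row_free_unit; apply: inj_row_free => v Hv.
have fY : row_free Y by rewrite /row_free rY.
have H1 : (v *m Y) *m (v *m Y)^T = 0 by rewrite trmx_mul !mulmxA -(mulmxA v) Hv mul0mx.
by apply/eqP; rewrite -(mulmx_free_eq0 _ fY); apply/eqP; apply: gram0.
Qed.

Lemma proj_formula N r (P : 'M[R]_N) (Y : 'M[R]_(r, N)) :
  P^T = P -> P *m P = P -> (P == Y)%MS -> \rank Y = r ->
  P = Y^T *m invmx (Y *m Y^T) *m Y.
Proof.
move=> PT PP /eqmxP PY rY.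
have U := gram_unit rY.
have [W HW] : exists W, Y = W *m P by apply/submxP; rewrite PY.
have YP : Y *m P = Y by rewrite HW -mulmxA PP.
have [Z HZ] : exists Z, P = Z *m Y by apply/submxP; rewrite PY.
have PZ : P = Y^T *m Z^T by rewrite -PT HZ trmx_mul.
have E : Y *m Y^T *m Z^T = Y by rewrite -mulmxA -PZ.
have EZ : Z^T = invmx (Y *m Y^T) *m Y by rewrite -[X in invmx _ *m X]E mulmxA mulVmx // mul1mx.
by rewrite PZ EZ mulmxA.
Qed.

Lemma final_alg N r (Y : 'M[R]_(N, r)) (Rk : 'M[R]_r) (V : 'M[R]_(N, r)) :
  Y^T *m Y = 1%:M -> Rk \in unitmx ->
  let X0 := Y *m Rk in let H0 := invmx (X0^T *m X0) in
  (V *m H0 + X0 *m (- (H0 *m (V^T *m X0 + X0^T *m V) *m H0))) *m X0^T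
    + X0 *m H0 *m V^T =
  (1%:M - Y *m Y^T) *m V *m invmx Rk *m Y^T
    + Y *m (invmx Rk)^T *m V^T *m (1%:M - Y *m Y^T).
Proof.
move=> YY U X0 H0.
set iR := invmx Rk.
have RiR : Rk *m iR = 1%:M by rewrite mulmxV.
have iRR : iR *m Rk = 1%:M by rewrite mulVmx.
have RiRT : iR^T *m Rk^T = 1%:M by rewrite -trmx_mul RiR trmx1.
have G : X0^T *m X0 = Rk^T *m Rk by rewrite trmx_mul mulmxA -(mulmxA _ Y^T) YY mulmx1.
have UG : X0^T *m X0 \in unitmx by rewrite G unitmx_mul unitmx_tr U.
have EH : H0 = iR *m iR^T.
  rewrite /H0 -[invmx _]mulmx1.
  have -> : (1%:M : 'M[R]_r) = X0^T *m X0 *m (iR *m iR^T).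
    by rewrite G mulmxA -(mulmxA _ Rk) RiR mulmx1 -trmx_mul iRR trmx1.
  by rewrite mulmxA mulVmx // mul1mx.
set A := Y *m iR^T; set B := iR *m Y^T.
have XH : X0 *m H0 = A by rewrite EH mulmxA -(mulmxA Y) RiR mulmx1.
have HX : H0 *m X0^T = B by rewrite EH /X0 trmx_mul mulmxA -(mulmxA iR) RiRT mulmx1.
have XB : X0 *m B = Y *m Y^T by rewrite /X0 /B mulmxA -(mulmxA Y) RiR mulmx1.
have AX : A *m X0^T = Y *m Y^T by rewrite /A /X0 trmx_mul mulmxA -(mulmxA Y) RiRT mulmx1.
have T1 : V *m H0 *m X0^T = V *m B by rewrite -mulmxA HX.
have T3 : X0 *m H0 *m V^T = A *m V^T by rewrite XH.
have T2 : X0 *m (- (H0 *m (V^T *m X0 + X0^T *m V) *m H0)) *m X0^T =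
    - (A *m V^T *m (Y *m Y^T) + Y *m Y^T *m V *m B).
  rewrite mulmxN mulNmx; congr (- _).
  have -> : X0 *m (H0 *m (V^T *m X0 + X0^T *m V) *m H0) *m X0^T =
     (X0 *m H0) *m (V^T *m X0 + X0^T *m V) *m (H0 *m X0^T) by rewrite !mulmxA.
  rewrite XH HX mulmxDr mulmxDl !mulmxA -(mulmxA _ Rk iR) RiR mulmx1 AX.
  done.
rewrite mulmxDl T1 T2 T3.
rewrite mulmxBl mul1mx -/B mulmxBr mulmx1 -/A !mulmxA !mulmxBl ?mulmxA.
exact: zid.
Qed.
End A.

Unset Implicit Arguments. Set Strict Implicit.

Section Cv.
Variable R : realType.
Variables n r : nat -> nat.
Variable c : R -> core R n r.
Variables U dV : core R n r.

Definition goodj j := forall (i0 : 'I_(n j)) a b,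
  is_derive (0:R) 1 (fun t => c t j i0 a b) (dV j i0 a b) /\ c 0 j i0 a b = U j i0 a b.

Lemma slice_der j x a b : goodj j ->
  is_derive (0:R) 1 (fun t => mxnth (slice (c t) j x) a b) (mxnth (slice dV j x) a b)
  /\ mxnth (slice (c 0) j x) a b = mxnth (slice U j x) a b.
Proof.
move=> Hj; rewrite /mxnth /slice.
case: (insub x : option 'I_(n j)) => [xo|]; case: (insub a : option 'I_(r j.-1)) => [a'|]; case: (insub b : option 'I_(r j)) => [b'|];
  rewrite ?mxE; try by split => //; apply: dC.
exact: Hj.
Qed.

Lemma tail_der m k0 i a : (forall j, (k0 <= j < k0 + m)%N -> goodj j) ->
  is_derive (0:R) 1 (fun t => tailchain (c t) m k0 i a) (tailchainV U dV m k0 i a)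
  /\ tailchain (c 0) m k0 i a = tailchain U m k0 i a.
Proof.
elim: m k0 a => [|m IH] k0 a H.
  by split => //=; apply: dC.
have Hk : goodj k0 by apply: H; rewrite leqnn addnS ltnS leq_addr.
have Hs b := slice_der k0 (i k0) a b Hk.
have IH' b := IH k0.+1 b (fun j hj => H j (introT andP (conj (ltnW (andP hj).1) (eq_ind _ (fun z => (j < z)%N) (andP hj).2 _ (addSnnS k0 m))))).
split.
  apply: is_derive_eq.
    apply: (@dS _ _ _ _ (fun (b : 'I_(r k0)) t => mxnth (slice (c t) k0 (i k0)) a b * tailchain (c t) m k0.+1 i b)) => b.
    exact: (@dM _ _ _ _ _ _ (Hs b).1 (IH' b).1).
  rewrite /=; apply: eq_bigr => b _.
  by rewrite (Hs b).2 (IH' b).2 [tailchain U m _ _ _ * _]mulrC.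
rewrite /=; apply: eq_bigr => b _.
by rewrite (Hs b).2 (IH' b).2.
Qed.

Lemma X_der d k : (k <= d)%N -> (forall j, (k < j <= d)%N -> goodj j) ->
  mxder (fun t => Xge (c t) d k.+1) (Vge U dV d k.+1) /\ Xge (c 0) d k.+1 = Xge U d k.+1.
Proof.
move=> kd H.
have H' : forall j, (k.+1 <= j < k.+1 + (d.+1 - k.+1))%N -> goodj j.
  move=> j /andP[h1 h2]; apply: H; rewrite h1 /=.
  by rewrite subnKC ?ltnS // in h2.
split.
  move=> a b; under eq_fun do rewrite mxE.
  rewrite mxE; exact: (tail_der _ _ _ _ H').1.
apply/matrixP => a b; rewrite !mxE; exact: (tail_der _ _ _ _ H').2.
Qed.
End Cv.

Theorem lemma19 (R : realType) (d : nat) (n r : nat -> nat)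
  (U Ut dV : core R n r) (c : R -> core R n r) (eps : R) (k : nat)
  (Rk : 'M[R]_(r k)) (P : R -> 'M[R]_(tdim n k.+1 d)) :
  (2 <= d)%N ->
  (forall j, (1 <= j <= d)%N -> (0 < n j)%N) ->
  r 0%N = 1%N -> r d = 1%N ->
  (0 < k < d)%N ->
  (* X = TT(U) lies in M_r and U is a minimal left-orthogonal decomposition *)
  (forall mu, (0 < mu < d)%N -> \rank (flat U d mu) = r mu) ->
  (forall j, (1 <= j < d)%N -> left_orth U j) ->
  (* Ut is a minimal right-orthogonal TT decomposition of the same X *)
  (forall i : nat -> nat, (forall j, (1 <= j <= d)%N -> (i j < n j)%N) ->
     ttentry Ut d i = ttentry U d i) ->
  (forall j, (2 <= j <= d)%N -> right_orth Ut j) ->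
  (* R_k : invertible with X_{>=k+1} = Xt_{>=k+1} R_k *)
  Rk \in unitmx ->
  Xge U d k.+1 = Xge Ut d k.+1 *m Rk ->
  (* tangent vector V given by the cores dV *)
  (forall j, (1 <= j < d)%N -> (coreL dV j)^T *m coreL U j = 0) ->
  (* the core curves c_1, ..., c_d on ]-eps, eps[ *)
  0 < eps ->
  (forall j (i : 'I_(n j)) a b, (1 <= j <= d)%N ->
     smooth_on `]-eps, eps[ (fun t => c t j i a b)) ->
  (forall j (i : 'I_(n j)) a b, (1 <= j < d)%N ->
     (fun t => c t j i a b - (U j i a b + t * dV j i a b)) =O_ (0 : R)
       (fun t => t ^+ 2)) ->
  (forall t, -eps < t < eps -> forall i, c t d i = U d i + t *: dV d i) ->
  (forall t, -eps < t < eps -> forall mu, (0 < mu < d)%N ->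
     \rank (flat (c t) d mu) = r mu) ->
  (forall t, -eps < t < eps -> forall j, (1 <= j < d)%N -> left_orth (c t) j) ->
  (* P_k(t) = orthogonal projector onto the row space of c_TT(t)^{<k>} *)
  (forall t, -eps < t < eps -> is_orth_proj (flat (c t) d k) (P t)) ->
  is_derive (0:R) 1 P
    ((1%:M - Xge Ut d k.+1 *m (Xge Ut d k.+1)^T) *m Vge U dV d k.+1
        *m invmx Rk *m (Xge Ut d k.+1)^T
     + Xge Ut d k.+1 *m (invmx Rk)^T *m (Vge U dV d k.+1)^T
        *m (1%:M - Xge Ut d k.+1 *m (Xge Ut d k.+1)^T)).
Proof.
move=> hd hn r0 rd hk hrank hlo htt hro hRk hXR hgauge heps hsm hO hcd hrkt hlot hP.
have k0 : (0 < k)%N by case/andP: hk.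
have kd : (k < d)%N by case/andP: hk.
have in0 : -eps < 0 < eps by rewrite oppr_lt0 heps.
have nitv : \forall t \near (0:R), -eps < t < eps.
  apply/nbhs_normP; exists eps => //= t; rewrite /ball_ /= sub0r normrN.
  by rewrite ltr_norml.
have G : forall j, (k < j <= d)%N -> goodj R n r c U dV j.
  move=> j /andP[kj jd] i0 a b.
  have j1 : (1 <= j)%N by apply: leq_trans kj.
  have [jlt | jge] := ltnP j d.
    have h1 : (1 <= j < d)%N by rewrite j1 jlt.
    have h2 : (1 <= j <= d)%N by rewrite j1 jd.
    have dd : derivable (fun t => c t j i0 a b) 0 1.
      by apply: (hsm j i0 a b h2 0%N 0); rewrite /= in_itv /= in0.
    have [e1 e2] := bigO_deriv _ _ _ dd (hO j i0 a b h1).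
    by split.
  have jeq : j = d by apply/eqP; rewrite eqn_leq jd jge.
  subst j.
  have E : forall t, -eps < t < eps -> c t d i0 a b = U d i0 a b + t * dV d i0 a b.
    by move=> t ht; rewrite (hcd t ht) !mxE.
  split; last by rewrite (E 0 in0) mul0r addr0.
  have h1 := @dD _ (fun _ => U d i0 a b) (fun t => t * dV d i0 a b) 0 0 (0 * 0 + dV d i0 a b * 1) (dC _ _) (@dM _ (fun t => t) (fun _ => dV d i0 a b) 0 1 0 (dI _) (dC _ _)).
  apply: near_eq_is_derive; last first.
    by apply: is_derive_eq h1 _; rewrite mul0r mulr1 !add0r.
  by near=> t; rewrite E //; exact: (near nitv t).
have [XD X0] := @X_der _ _ _ c U dV d k (ltnW kd) G.
set X := fun t => Xge (c t) d k.+1.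
have HQ : \forall t \near (0:R),
    X t *m invmx ((X t)^T *m X t) *m (X t)^T = P t /\ (X t)^T *m X t \in unitmx.
  near=> t.
  have ht : -eps < t < eps by exact: (near nitv t).
  have [PT [PP PF]] := hP t ht.
  have kd' : (0 < k <= d)%N by rewrite k0 ltnW.
  have Ff := flat_fact (c t) kd'.
  have rkX : \rank (X t)^T = r k.
    apply/eqP; rewrite eqn_leq rank_leq_row /= -{1}(hrkt t ht k hk) Ff.
    exact: mxrankM_maxr.
  have sub : (flat (c t) d k <= (X t)^T)%MS by rewrite Ff submxMl.
  have EQ : (flat (c t) d k == (X t)^T)%MS.
    apply/andP; split => //.
    by rewrite -(mxrank_leqif_sup sub).2 (hrkt t ht k hk) rkX.
  have PX : (P t == (X t)^T)%MS.
    apply/eqmxP; exact: eqmx_trans (eqmxP PF) (eqmxP EQ).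
  have := proj_formula PT PP PX rkX; rewrite trmxK => <-.
  split => //.
  by have := gram_unit rkX; rewrite trmxK.
have HU : \forall t \near (0:R), (X t)^T *m X t \in unitmx.
  by apply: filterS HQ => t [].
have HG := mxderM (mxderT XD) XD.
have HI := mxder_inv HG HU.
have HQd := mxderM (mxderM XD HI) (mxderT XD).
have HPd := mxder_near (G := P) _ HQd.
apply: is_derive_eq.
  apply: mxder_is_derive; apply: HPd.
  by apply: filterS HQ => t [].
rewrite /= /X X0 hXR.
have YY : (Xge Ut d k.+1)^T *m Xge Ut d k.+1 = 1%:M.
  have kd1 : (k.+1 <= d.+1)%N by rewrite ltnS ltnW.
  apply: (@Xge_orth R n r Ut d rd k.+1 kd1).
  move=> l /andP[kl ld]; split; first by apply: hn; rewrite ld andbT; apply: leq_trans kl.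
  by apply: hro; rewrite ld andbT; apply: leq_ltn_trans kl.
exact: (final_alg (Vge U dV d k.+1) YY hRk).
Unshelve. all: by end_near. Qed.
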